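(* Let $Z=\bigsqcup_n Z_n$ be a bounded degree simplicial complex, where $(Z_n)_{n\in\mathbb{N}}$ is a $1$-dimensional bounded degree topological expander. Then for each $n$ there is a subcomplex $\Gamma_n\leq Z_n$ such that $(\Gamma_n)_{n\in\mathbb{N}}$ is a graphical expander.
   Context: A simplicial complex is the topological realisation of an abstract simplicial complex $(S,\mathcal S)$; bounded degree means $S$ countable and $\max_s|\{t\ne s:\{s,t\}\in\mathcal S\}|<\infty$. $|Z|$ denotes the number of $0$-simplices; closed simplices are sets of points whose support lies in a fixed element of $\mathcal S$; $\Gamma\le Z$ means an injection of $0$-simplices sending simplices to simplices. For finite $Z$ and continuous $f:Z\to\mathbb R^q$, ${}_s\mathrm{Ov}(f)=\max_{z}|\{\sigma\text{ closed simplex of }Z: z\in f(\sigma)\}|$ and ${}_s\mathrm{TO}^q(Z)=\min_f {}_s\mathrm{Ov}(f)$. A $1$-dimensional $(\Delta,\varepsilon)$-topological expander is a family $(Z_n)$ of finite $1$-dimensional simplicial complexes with $|Z_n|\to\infty$, $\deg(Z_n)\le\Delta$ and ${}_s\mathrm{TO}^1(Z_n)\ge\varepsilon|Z_n|$ for all $n$. For a finite graph $\Gamma$ with $n$ vertices, the vertex boundary $\partial A$ of $A\subseteq V\Gamma$ is the set of vertices outside $A$ adjacent to $A$, and $h(\Gamma)=\min\{|\partial A|/|A|: 0<|A|\le n/2\}$. A family $(\Gamma_n)$ of finite graphs is a graphical expander if $|V\Gamma_n|\to\infty$, $\sup_n\deg(\Gamma_n)<\infty$ and $\inf_n h(\Gamma_n)>0$.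 *)

(* Defs.v *)
From HB Require Import structures.
From mathcomp Require Import all_boot all_order all_algebra.
From mathcomp Require Import all_classical all_reals all_analysis.
Set Implicit Arguments. Unset Strict Implicit. Unset Printing Implicit Defensive.
Import Order.TTheory GRing.Theory Num.Theory.
Import numFieldNormedType.Exports.
Local Open Scope ring_scope.


Definition is_simplicial_complex (V : finType) (S : {set {set V}}) : Prop :=
  (forall v : V, [set v]%SET \in S) /\ (finset.set0 : {set V}) \notin S /\
  (forall s t : {set V}, s \in S -> t \subset s -> t != finset.set0 -> t \in S).

Definition dim_le1 (V : finType) (S : {set {set V}}) : Prop :=
  forall s, s \in S -> (#|s| <= 2)%N.

Definition cdeg (V : finType) (S : {set {set V}}) (s : V) : nat :=
  #|[set t | (t != s) && ([set s; t]%SET \in S)]|.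

Definition cdeg_le (V : finType) (S : {set {set V}}) (D : nat) : Prop :=
  forall s : V, (cdeg S s <= D)%N.

Definition supp (R : realType) (V : finType) (x : V -> R) : {set V} :=
  [set v | x v != 0].

(* Topological realisation |Z| inside R^V (product topology; for a finite
   complex this is the usual topology of the realisation). *)
Definition realization (R : realType) (V : finType) (S : {set {set V}})
  : set {ptws V -> R} :=
  [set x | (forall v, 0 <= x v) /\ \sum_(v : V) x v = 1 /\ supp x \in S]%classic.

Definition closed_simplex (R : realType) (V : finType) (S : {set {set V}})
  (sigma : {set V}) : set {ptws V -> R} :=
  [set x | @realization R V S x /\ supp x \subset sigma]%classic.

Definition overlap_at (R : realType) (V : finType) (S : {set {set V}})
  (f : {ptws V -> R} -> R) (z : R) : nat :=
  #|[set sigma in S | `[< exists x, @closed_simplex R V S sigma x /\ f x = z >]]|.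

(* _s TO^1(Z) >= t, i.e. min over continuous f : |Z| -> R of
   max over z of overlap_at f z is >= t *)
Definition topol_overlap_ge (R : realType) (V : finType) (S : {set {set V}})
  (t : R) : Prop :=
  forall f : {ptws V -> R} -> R,
    {within @realization R V S, continuous f}%classic ->
    exists z : R, t <= (overlap_at S f z)%:R.

Definition topological_expander (R : realType) (V : nat -> finType)
  (S : forall n, {set {set V n}}) (D : nat) (eps : R) : Prop :=
  (forall n, is_simplicial_complex (S n) /\ dim_le1 (S n)) /\
  (forall M : nat, exists N : nat, forall n, (N <= n)%N -> (M <= #|V n|)%N) /\
  (forall n, cdeg_le (S n) D) /\
  (forall n, @topol_overlap_ge R (V n) (S n) (eps * #|V n|%:R)).

Definition simple_graph (W : finType) (e : rel W) : Prop :=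
  symmetric e /\ irreflexive e.

Definition vboundary (W : finType) (e : rel W) (A : {set W}) : {set W} :=
  [set y | (y \notin A) && [exists x in A, e x y]].

Definition gdeg (W : finType) (e : rel W) (x : W) : nat := #|[set y | e x y]|.

Definition cheeger_ge (R : realType) (W : finType) (e : rel W) (c : R) : Prop :=
  forall A : {set W}, (0 < #|A|)%N -> (2 * #|A| <= #|W|)%N ->
    c <= (#|vboundary e A|%:R / #|A|%:R).

Definition graphical_expander (R : realType) (W : nat -> finType)
  (e : forall n, rel (W n)) : Prop :=
  (forall n, simple_graph (e n)) /\
  (forall M : nat, exists N : nat, forall n, (N <= n)%N -> (M <= #|W n|)%N) /\
  (exists D : nat, forall n (x : W n), (gdeg (e n) x <= D)%N) /\
  (exists c : R, 0 < c /\ forall n, cheeger_ge (e n) c).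

(* Gamma <= Z: injection of 0-simplices sending simplices (vertices, edges)
   to simplices *)
Definition subcomplex_emb (W : finType) (e : rel W) (V : finType)
  (S : {set {set V}}) (phi : W -> V) : Prop :=
  injective phi /\ (forall x, [set phi x]%SET \in S) /\
  (forall x y, e x y -> [set phi x; phi y]%SET \in S).

(* Main.v *)
Require Import Defs.
From HB Require Import structures.
From mathcomp Require Import all_boot all_order all_algebra.
From mathcomp Require Import all_classical all_reals all_analysis.
Set Implicit Arguments. Unset Strict Implicit. Unset Printing Implicit Defensive.
Import Order.TTheory GRing.Theory Num.Theory.
Import numFieldNormedType.Exports.
Local Open Scope ring_scope.

Definition linf (R : realType) (V : finType) (g : V -> nat) : {ptws V -> R} -> R :=
  fun x => \sum_(v <- enum V) x v * (g v)%:R.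

Lemma proj_cont (R : realType) (V : finType) (a : V) :
  continuous (fun y : {ptws V -> R} => y a).
Proof. exact: (@proj_continuous V (fun _ => R) a). Qed.

Lemma projk_cont (R : realType) (V : finType) (a : V) (k : R) :
  continuous (fun y : {ptws V -> R} => y a * k).
Proof.
move=> x.
exact (@continuous_comp _ _ _ (fun y : {ptws V -> R} => y a) ( *%R^~ k) x (@proj_cont R V a x) (@mulrr_continuous _ k (x a))).
Qed.

Lemma add_cont (R : realType) (V : finType) (F G : {ptws V -> R} -> R) :
  continuous F -> continuous G -> continuous (fun y => F y + G y).
Proof.
move=> hF hG x.
exact (cvgD (hF x) (hG x)).
Qed.

Lemma linf_cont (R : realType) (V : finType) (g : V -> nat) :
  continuous (@linf R V g).
Proof.
rewrite /linf; elim: (enum V) => [|a s IH].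
  have -> : (fun x : {ptws V -> R} => \sum_(v <- [::]) x v * (g v)%:R) = fun _ => 0.
    by apply: funext => x; rewrite big_nil.
  exact: cst_continuous.
have -> : (fun x : {ptws V -> R} => \sum_(v <- a :: s) x v * (g v)%:R) =
   (fun x => x a * (g a)%:R + \sum_(v <- s) x v * (g v)%:R).
  by apply: funext => x; rewrite big_cons.
exact (add_cont (@projk_cont R V a (g a)%:R) IH).
Qed.

From mathcomp Require Import ring lra zify.

Definition adj (V : finType) (S : {set {set V}}) (u w : V) : bool :=
  (w != u) && ([set u; w]%SET \in S).

Definition cost (R : realType) (V : finType) (S : {set {set V}}) (U : {set V})
  (g : V -> nat) (z : R) : nat :=
  #|[set v in U | (g v)%:R == z]| +
  #|[set p : V * V | [&& p.1 \in U, p.2 \in U, adj S p.1 p.2,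
                        (g p.1)%:R <= z & z <= (g p.2)%:R]]|.

Definition bnd (V : finType) (S : {set {set V}}) (U A : {set V}) : {set V} :=
  [set y in U | (y \notin A) && [exists x in A, adj S x y]].

Definition outp (V : finType) (S : {set {set V}}) (B : {set V}) : {set V * V} :=
  [set p : V * V | (p.1 \in B) && adj S p.1 p.2].

Definition crossp (V : finType) (S : {set {set V}}) (U A : {set V}) : {set V * V} :=
  [set p : V * V | [&& p.1 \in U, p.2 \in U, adj S p.1 p.2 & (p.1 \in A) != (p.2 \in A)]].

Lemma cardsU_le (T : finType) (A B : {set T}) : (#|A :|: B| <= #|A| + #|B|)%N.
Proof. by rewrite -cardsUI leq_addr. Qed.

Lemma adj_sym (V : finType) (S : {set {set V}}) u w : adj S u w = adj S w u.
Proof. by rewrite /adj eq_sym finset.setUC. Qed.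

Lemma card_out (V : finType) (S : {set {set V}}) (D : nat)
  (hD : forall s, (#|[set t | adj S s t]| <= D)%N) (B : {set V}) :
  (#|outp S B| <= D * #|B|)%N.
Proof.
move: {2}#|B| (leqnn #|B|) => n; elim: n B => [|n IH] B hB.
  move: hB; rewrite leqn0 cards_eq0 => /eqP ->.
  rewrite cards0 muln0 leqn0 cards_eq0; apply/eqP/setP => p; by rewrite !inE.
case: (set_0Vmem B) => [-> | [x xB]].
  rewrite (_ : outp S finset.set0 = finset.set0) ?cards0 //.
  by apply/setP => p; rewrite !inE.
have hB' : (#|B :\ x| <= n)%N.
  by move: hB; rewrite (cardsD1 x B) xB add1n ltnS.
apply: (@leq_trans #|outp S (B :\ x) :|: (fun y => (x, y)) @: [set t | adj S x t]|).
  apply: subset_leq_card; apply/fintype.subsetP => -[a b]; rewrite !inE /= => /andP [aB ab].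
  case: (eqVneq a x) => [eax | ax].
    rewrite eax in ab *; apply/orP; right; apply/imsetP; exists b => //; by rewrite inE.
  by rewrite aB ab.
apply: leq_trans (cardsU_le _ _) _.
have h1 := IH _ hB'; have h2 := leq_trans (leq_imset_card _ _) (hD x).
apply: leq_trans (leq_add h1 (h2 _ (fun y => (x, y)))) _.
rewrite (cardsD1 x B) xB add1n mulnS addnC leqnn //.
Qed.

Lemma card_cross (V : finType) (S : {set {set V}}) (D : nat)
  (hD : forall s, (#|[set t | adj S s t]| <= D)%N) (U A : {set V}) :
  (#|crossp S U A| <= 2 * D * #|bnd S U A|)%N.
Proof.
apply: (@leq_trans #|outp S (bnd S U A) :|: (fun p : V * V => (p.2, p.1)) @: outp S (bnd S U A)|).
  apply: subset_leq_card; apply/fintype.subsetP => -[a b]; rewrite !inE /=.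
  case/and4P => aU bU ab; case aA: (a \in A); case bA: (b \in A) => //= _.
    apply/orP; right; apply/imsetP; exists (b, a) => //.
    rewrite !inE /= bU bA adj_sym ab andbT /=; apply/existsP; exists a; by rewrite aA.
  apply/orP; left; rewrite aU ab andbT /=; apply/existsP; exists b; by rewrite bA adj_sym.
apply: leq_trans (cardsU_le _ _) _.
apply: leq_trans (leq_add (leqnn _) (leq_imset_card _ _)) _.
move: (card_out hD (bnd S U A)) => hh; rewrite -mulnA mul2n -addnn; exact: (leq_add hh hh).
Qed.

Lemma cost_split (R : realType) (V : finType) (S : {set {set V}}) (U A : {set V})
  (g : V -> nat) (z : R) : A \subset U ->
  (cost S U g z <= cost S A g z + cost S (U :\: A) g z + #|crossp S U A|)%N.
Proof.
move=> AU; rewrite /cost.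
set P1 := [set v in U | _]; set P2 := [set p : V * V | _ ].
set A1 := [set v in A | _]; set A2 := [set p : V * V | [&& p.1 \in A, _ & _]].
set Q1 := [set v in U :\: A | _]; set Q2 := [set p : V * V | [&& p.1 \in U :\: A, _ & _]].
have h1 : (#|P1| <= #|A1| + #|Q1|)%N.
  apply: leq_trans (cardsU_le _ _); apply: subset_leq_card; apply/fintype.subsetP => v.
  rewrite !inE; case: (v \in A) => //=; case: (v \in U) => //=; by case: (_ == _).
have h2 : (#|P2| <= #|A2| + #|Q2| + #|crossp S U A|)%N.
  apply: (@leq_trans #|(A2 :|: Q2) :|: crossp S U A|); last first.
    apply: leq_trans (cardsU_le _ _) _; apply: leq_add => //; exact: cardsU_le.
  apply: subset_leq_card; apply/fintype.subsetP => -[a b].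
  rewrite !inE /=; case/and5P => aU bU ab h3 h4; rewrite aU bU ab h3 h4 !andbT /=.
  have aU' : (a \in A) -> a \in U by move=> ?; apply: (fintype.subsetP AU).
  by case: (a \in A); case: (b \in A).
lia.
Qed.

Lemma cost_shift (R : realType) (V : finType) (S : {set {set V}}) (U : {set V})
  (g h : V -> nat) (a : nat) (z : R) : (forall v, v \in U -> g v = (a + h v)%N) ->
  cost S U g z = cost S U h (z - a%:R).
Proof.
move=> gh; rewrite /cost; congr (_ + _); apply: eq_card => v; rewrite !inE.
  case vU: (v \in U) => //=; rewrite gh // natrD.
  by apply/eqP/eqP => H; lra.
case/boolP: (v.1 \in U) => //= v1U; case/boolP: (v.2 \in U) => //= v2U.
rewrite !gh // !natrD; case: (adj S v.1 v.2) => //=.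
by congr andb; apply/idP/idP => H; lra.
Qed.

Lemma cost_zero_lo (R : realType) (V : finType) (S : {set {set V}}) (U : {set V})
  (g : V -> nat) (a : nat) (z : R) : (forall v, v \in U -> (a <= g v)%N) ->
  z < a%:R -> cost S U g z = 0%N.
Proof.
move=> ga za; apply/eqP; rewrite /cost addn_eq0 !cards_eq0; apply/andP; split;
  apply/eqP/setP => v; rewrite !inE.
  case vU: (v \in U) => //=; apply/negbTE; apply: contraTneq za => <-.
  by rewrite -leNgt ler_nat ga.
case/boolP: (v.1 \in U) => //= v1U.
have H : ((g v.1)%:R <= z) = false.
  by apply/negbTE; rewrite -ltNge; apply: (lt_le_trans za); rewrite ler_nat ga.
by rewrite H /= !andbF.
Qed.

Lemma cost_zero_hi (R : realType) (V : finType) (S : {set {set V}}) (U : {set V})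
  (g : V -> nat) (a : nat) (z : R) : (forall v, v \in U -> (g v < a)%N) ->
  a%:R <= z -> cost S U g z = 0%N.
Proof.
move=> ga za; apply/eqP; rewrite /cost addn_eq0 !cards_eq0; apply/andP; split;
  apply/eqP/setP => v; rewrite !inE.
  case vU: (v \in U) => //=; apply/negbTE; apply: contraTneq za => <-.
  by rewrite -ltNge ltr_nat ga.
case/boolP: (v.2 \in U) => v2U; last by rewrite !andbF.
have H : (z <= (g v.2)%:R) = false.
  by apply/negbTE; rewrite -ltNge; apply: (lt_le_trans _ za); rewrite ltr_nat ga.
by rewrite H /= !andbF.
Qed.

Lemma cost_base (R : realType) (V : finType) (S : {set {set V}}) (D : nat)
  (hD : forall s, (#|[set t | adj S s t]| <= D)%N) (U : {set V}) (g : V -> nat) (z : R) :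
  (cost S U g z <= D.+1 * #|U|)%N.
Proof.
rewrite /cost mulSn; apply: leq_add.
  by apply: subset_leq_card; apply/fintype.subsetP => v; rewrite inE => /andP [].
apply: leq_trans (card_out hD U); apply: subset_leq_card; apply/fintype.subsetP => p.
by rewrite !inE => /and5P [-> _ -> _ _].
Qed.

Lemma bnd_union (V : finType) (S : {set {set V}}) (U Rs A : {set V}) :
  bnd S U (Rs :|: A) \subset bnd S U Rs :|: bnd S (U :\: Rs) A.
Proof.
apply/fintype.subsetP => y; rewrite !inE negb_or => /and3P [yU /andP [yR yA] /existsP [x]].
rewrite inE => /andP [/orP [xR|xA] xy].
  by rewrite yU yR /=; apply/orP; left; apply/existsP; exists x; rewrite xR.
by rewrite yU yR yA /=; apply/orP; right; apply/existsP; exists x; rewrite xA.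
Qed.

Lemma split_lemma (R : realType) (V : finType) (S : {set {set V}}) (c : R) (K : nat)
  (NE : forall U' : {set V}, (K <= #|U'|)%N -> exists A : {set V},
     [/\ A \subset U', (0 < #|A|)%N, (2 * #|A| <= #|U'|)%N &
         #|bnd S U' A|%:R < c * #|A|%:R])
  (U : {set V}) : (2 * K <= #|U|)%N -> (0 < #|U|)%N ->
  exists A : {set V}, [/\ A \subset U, (#|U| <= 4 * #|A|)%N, (4 * #|A| <= 3 * #|U|)%N &
     #|bnd S U A|%:R <= c * #|A|%:R].
Proof.
move=> hK hU.
suff: forall j (Rs : {set V}), (#|U| - #|Rs| <= j)%N -> Rs \subset U -> (4 * #|Rs| < #|U|)%N ->
  #|bnd S U Rs|%:R <= c * #|Rs|%:R ->
  exists A : {set V}, [/\ A \subset U, (#|U| <= 4 * #|A|)%N, (4 * #|A| <= 3 * #|U|)%N &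
     #|bnd S U A|%:R <= c * #|A|%:R].
  move=> /(_ #|U| finset.set0); rewrite cards0 subn0 muln0; apply => //; first exact: finset.sub0set.
  rewrite (_ : bnd S U finset.set0 = finset.set0) ?cards0 ?mulr0 //.
  by apply/setP => y; rewrite !inE; case: (y \in U) => //=; apply/existsP => -[x]; rewrite inE.
elim=> [|j IH] Rs hj RU h4 hb; first by exfalso; move: hj h4; lia.
have cU' : #|U :\: Rs| = (#|U| - #|Rs|)%N by rewrite cardsD (finset.setIidPr RU).
have [A [AU' A0 A2 Ab]] := NE (U :\: Rs) ltac:(rewrite cU'; lia).
have dis : Rs :&: A = finset.set0.
  apply/setP => y; rewrite !inE; case yR: (y \in Rs) => //=; apply/negbTE.
  by apply/negP => /(fintype.subsetP AU'); rewrite inE yR.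
have cR2 : #|Rs :|: A| = (#|Rs| + #|A|)%N by rewrite cardsU dis cards0 subn0.
have R2U : Rs :|: A \subset U.
  rewrite finset.subUset RU /=; apply: fintype.subset_trans AU' _; exact: finset.subsetDl.
have hb2 : #|bnd S U (Rs :|: A)|%:R <= c * #|Rs :|: A|%:R.
  have := leq_trans (subset_leq_card (bnd_union S U Rs A)) (cardsU_le _ _).
  rewrite -(ler_nat R) natrD cR2 natrD => H; apply: (le_trans H).
  by rewrite mulrDr lerD // ltW.
case: (leqP #|U| (4 * #|Rs :|: A|)) => hcase.
  exists (Rs :|: A); split => //; rewrite cR2; move: A2 h4; rewrite cU'; lia.
apply: (IH (Rs :|: A)) => //; rewrite cR2; lia.
Qed.

Lemma decomp (R : realType) (V : finType) (S : {set {set V}}) (D : nat)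
  (hD : forall s, (#|[set t | adj S s t]| <= D)%N) (c : R) (K : nat) (hc : 0 <= c)
  (NE : forall U' : {set V}, (K <= #|U'|)%N -> exists A : {set V},
     [/\ A \subset U', (0 < #|A|)%N, (2 * #|A| <= #|U'|)%N &
         #|bnd S U' A|%:R < c * #|A|%:R]) :
  forall k (U : {set V}), (#|U| <= k)%N -> exists g : V -> nat,
    (forall v, v \in U -> (g v < #|U|)%N) /\
    forall z : R, (cost S U g z)%:R <= 8%:R * D%:R * c * #|U|%:R + (D.+1 * (2 * K))%:R.
Proof.
have base : forall U : {set V}, (#|U| < 2 * K)%N \/ #|U| = 0%N -> exists g : V -> nat,
    (forall v, v \in U -> (g v < #|U|)%N) /\
    forall z : R, (cost S U g z)%:R <= 8%:R * D%:R * c * #|U|%:R + (D.+1 * (2 * K))%:R.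
  move=> U hU; exists (fun _ => 0%N); split.
    by move=> v vU; apply/card_gt0P; exists v.
  move=> z; have h1 := cost_base hD U (fun _ => 0%N) z.
  have h2 : (D.+1 * #|U| <= D.+1 * (2 * K))%N.
    by apply: leq_mul => //; case: hU => [/ltnW|->].
  have h3 : 0 <= 8%:R * D%:R * c * #|U|%:R :> R.
    by rewrite !mulr_ge0 // ler0n.
  rewrite -(ler_nat R) in h1; rewrite -(ler_nat R) in h2; lra.
elim=> [|k IH] U hUk.
  by apply: base; right; move: hUk; rewrite leqn0 => /eqP.
case: (ltnP #|U| (2 * K)) => hK; first by apply: base; left.
case: (posnP #|U|) => hU0; first by apply: base; right.
have [A [AU h4A h4A' hbA]] := split_lemma NE hK hU0.
set Q := U :\: A.
have cQ : #|Q| = (#|U| - #|A|)%N by rewrite cardsD (finset.setIidPr AU).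
have [g1 [g1l g1c]] := IH A ltac:(lia).
have [g2 [g2l g2c]] := IH Q ltac:(rewrite cQ; lia).
pose g v := if v \in A then g1 v else (#|A| + g2 v)%N.
exists g; split.
  move=> v vU; rewrite /g; case: ifP => vA.
    by apply: leq_trans (g1l v vA) _; apply: subset_leq_card.
  have vQ : v \in Q by rewrite inE vA vU.
  have := g2l v vQ; rewrite cQ; lia.
move=> z.
have hs := cost_split S g z AU.
have eA : cost S A g z = cost S A g1 (z - 0%:R).
  by apply: cost_shift => v vA; rewrite /g vA.
have eQ : cost S Q g z = cost S Q g2 (z - #|A|%:R).
  by apply: cost_shift => v; rewrite inE /g => /andP [/negbTE -> _].
rewrite subr0 in eA.
have hcr := card_cross hD U A.
have hcrR : (#|crossp S U A|)%:R <= 2%:R * D%:R * c * #|A|%:R :> R.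
  rewrite -(ler_nat R) !natrM in hcr; apply: (le_trans hcr).
  rewrite -!mulrA; apply: ler_wpM2l; first by rewrite ler0n.
  by apply: ler_wpM2l; first by rewrite ler0n.
have hAk : (#|A|%:R <= #|U|%:R :> R) by rewrite ler_nat; apply: subset_leq_card.
have hP : 0 <= D%:R * c :> R by rewrite mulr_ge0 // ler0n.
have {}hs : (cost S U g z)%:R <= (cost S A g z)%:R + (cost S Q g z)%:R
   + (#|crossp S U A|)%:R :> R by rewrite -!natrD ler_nat.
case: (ltP z #|A|%:R) => hz.
  have z0 : cost S Q g z = 0%N.
    by apply: (@cost_zero_lo R V S Q g #|A| z) => // v; rewrite inE /g => /andP [/negbTE -> _]; exact: leq_addr.
  rewrite z0 eA in hs.
  have hm : (4 * #|A|)%:R <= (3 * #|U|)%:R :> R by rewrite ler_nat.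
  rewrite !natrM in hm.
  have := g1c z; nra.
have z0 : cost S A g z = 0%N.
  by apply: (@cost_zero_hi R V S A g #|A| z) => // v vA; rewrite /g vA; exact: g1l.
rewrite z0 eQ in hs.
have hm : (4 * #|Q|)%:R <= (3 * #|U|)%:R :> R by rewrite ler_nat cQ; lia.
rewrite !natrM in hm.
have := g2c (z - #|A|%:R); nra.
Qed.
Lemma sum_two (R : realType) (V : finType) (F : V -> R) u w : u != w ->
  (forall t, t != u -> t != w -> F t = 0) -> \sum_t F t = F u + F w.
Proof.
move=> uw H; rewrite (bigD1 u) //= (bigD1 w) /=; last by rewrite eq_sym.
rewrite big1 ?addr0 // => t /andP [tu tw]; exact: H.
Qed.

Lemma sum_one (R : realType) (V : finType) (F : V -> R) u :
  (forall t, t != u -> F t = 0) -> \sum_t F t = F u.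
Proof.
move=> H; rewrite (bigD1 u) //= big1 ?addr0 // => t tu; exact: H.
Qed.

Lemma overlap_le (R : realType) (V : finType) (S : {set {set V}}) (g : V -> nat) (z : R) :
  is_simplicial_complex S -> dim_le1 S ->
  (overlap_at S (@linf R V g) z <= cost S [set: V] g z)%N.
Proof.
move=> [S1 [S0 _]] dimS; rewrite /overlap_at /cost.
set Pz := [set p : V * V | _]; set Vz := [set v in [set: V] | _].
apply: (@leq_trans #|(fun v => [set v]) @: Vz :|: (fun p => [set p.1; p.2]) @: Pz|);
  last by apply: leq_trans (cardsU_le _ _) _; apply: leq_add; exact: leq_imset_card.
apply: subset_leq_card; apply/fintype.subsetP => sigma; rewrite inE => /andP [sS /asboolP [x [[[x0 [x1 xs]] xsupp] fx]]].
have xz : forall t, t \notin sigma -> x t = 0.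
  move=> t tn; apply/eqP; apply: contraNT tn => xt.
  by apply: (fintype.subsetP xsupp); rewrite inE.
have lfE : linf g x = \sum_t x t * (g t)%:R by rewrite /linf big_enum.
have h2 := dimS sigma sS.
have hne : sigma != finset.set0 by apply: contraNneq S0 => <-.
have : (#|sigma| == 1)%N || (#|sigma| == 2)%N.
  move: hne h2; rewrite -card_gt0; case: #|sigma| => [|[|[|]]] //.
case/orP => [/cards1P [v sv] | /cards2P [u [w [uw sv]]]].
  apply/setUP; left; apply/imsetP; exists v => //.
  have xt : forall t, t != v -> x t = 0 by move=> t tv; apply: xz; rewrite sv inE.
  have xv : x v = 1 by rewrite -x1 (sum_one xt).
  rewrite !inE /= -fx lfE (@sum_one _ _ (fun t => x t * (g t)%:R) v).
    by rewrite xv mul1r eqxx.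
  by move=> t tv; rewrite xt ?mul0r.
apply/setUP; right; apply/imsetP.
have xt : forall t, t != u -> t != w -> x t = 0.
  by move=> t tu tw; apply: xz; rewrite sv !inE negb_or tu tw.
have sx : x u + x w = 1 by rewrite -x1 (sum_two uw xt).
have fE : z = x u * (g u)%:R + x w * (g w)%:R.
  rewrite -fx lfE (@sum_two _ _ (fun t => x t * (g t)%:R) u w uw) //.
  by move=> t tu tw; rewrite xt ?mul0r.
have xu0 := x0 u; have xw0 := x0 w.
have [le|lt] := Order.TotalTheory.leP ((g u)%:R : R) (g w)%:R.
  exists ((u, w) : V * V); last by rewrite sv.
  rewrite inE /= !inE /adj eq_sym uw -sv sS /=.
  apply/andP; split; rewrite fE; nra.
exists ((w, u) : V * V); last by rewrite sv finset.setUC.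
rewrite inE /= !inE /adj uw finset.setUC -sv sS /=.
apply/andP; split; rewrite fE; nra.
Qed.

Definition expnd (R : realType) (V : finType) (S : {set {set V}}) (c : R) (U : {set V}) : Prop :=
  forall A : {set V}, A \subset U -> (0 < #|A|)%N -> (2 * #|A| <= #|U|)%N ->
    c <= #|bnd S U A|%:R / #|A|%:R.

Lemma expnd0 (R : realType) (V : finType) (S : {set {set V}}) (c : R) :
  expnd S c finset.set0.
Proof.
move=> A; rewrite finset.subset0 => /eqP ->; by rewrite cards0.
Qed.

Definition bestU (R : realType) (V : finType) (S : {set {set V}}) (c : R) : {set V} :=
  [arg max_(U > finset.set0 | `[< expnd S c U >]) #|U|].

Lemma bestU_spec (R : realType) (V : finType) (S : {set {set V}}) (c : R) :
  expnd S c (bestU S c) /\ forall U, expnd S c U -> (#|U| <= #|bestU S c|)%N.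
Proof.
rewrite /bestU; case: arg_maxnP; first by apply/asboolP; exact: expnd0.
move=> U /asboolP hU hmax; split => // U' hU'; apply: hmax; exact/asboolP.
Qed.

Lemma claim (R : realType) (V : finType) (S : {set {set V}}) (D : nat) (eps : R)
  (hsc : is_simplicial_complex S) (hdim : dim_le1 S)
  (hD : forall s, (#|[set t | adj S s t]| <= D)%N) (eps0 : 0 < eps)
  (htop : topol_overlap_ge S (eps * #|V|%:R)) (K : nat) :
  (8 * D.+1 * K)%:R <= eps * #|V|%:R ->
  exists U, expnd S (eps / (16 * D.+1)%:R) U /\ (K <= #|U|)%N.
Proof.
move=> hK; set c := eps / (16 * D.+1)%:R.
case: (posnP K) => [-> | Kpos]; first by exists finset.set0; split => //; exact: expnd0.
apply: contrapT => H.
have hc : 0 <= c by rewrite /c divr_ge0 // ?ltW // ler0n.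
have NE : forall U' : {set V}, (K <= #|U'|)%N -> exists A : {set V},
     [/\ A \subset U', (0 < #|A|)%N, (2 * #|A| <= #|U'|)%N &
         #|bnd S U' A|%:R < c * #|A|%:R].
  move=> U' hU'; have nexp : ~ expnd S c U' by move=> hex; apply: H; exists U'.
  move/existsNP: nexp => [A /not_implyP [AU /not_implyP [A0 /not_implyP [A2 hlt]]]].
  exists A; split => //.
  have : #|bnd S U' A|%:R / #|A|%:R < c.
    by rewrite ltNge; apply/negP.
  by rewrite ltr_pdivrMr // ltr0n.
have [g [_ hg]] := decomp hD hc NE (leqnn #|[set: V]|).
have hcont : {within @realization R V S, continuous (@linf R V g)}%classic.
  exact: continuous_subspaceT (@linf_cont R V g).
have [z hz] := htop (@linf R V g) hcont.
have ho := overlap_le g z hsc hdim.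
have h1 := hg z; rewrite cardsT in h1.
have h2 : eps * #|V|%:R <= (cost S [set: V] g z)%:R.
  by apply: (le_trans hz); rewrite ler_nat.
have hDc : (D.+1)%:R * c = eps / 16%:R.
  rewrite /c natrM; field.
  by apply/negP => /eqP Hx; have := ler0n R D; lra.
have hDD : D%:R <= (D.+1)%:R :> R by rewrite ler_nat.
have hK1 : 1 <= K%:R :> R by rewrite ler1n.
rewrite !natrM in hK h1.
have hn : 0 <= #|V|%:R :> R by rewrite ler0n.
have hd : 0 <= D%:R :> R by rewrite ler0n.
have hx : 8%:R * D%:R * c * #|V|%:R <= eps / 2%:R * #|V|%:R :> R.
  have : D%:R * c * #|V|%:R <= (D.+1)%:R * c * #|V|%:R :> R.
    by apply: ler_wpM2r => //; apply: ler_wpM2r.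
  rewrite hDc; lra.
have hpos : 1 <= (D.+1)%:R * K%:R :> R by rewrite -natrM ler1n muln_gt0 Kpos.
lra.
Qed.

Lemma card_W (V : finType) (U : {set V}) : #|{: {x : V | x \in U}}| = #|U|.
Proof. by rewrite card_sig; apply: eq_card => x; rewrite inE. Qed.

Unset Implicit Arguments. Set Strict Implicit. Set Printing Implicit Defensive.

Theorem corollary1p5 (R : realType) (V : nat -> finType)
  (S : forall n, {set {set V n}}) :
  (exists (D : nat) (eps : R), 0 < eps /\ topological_expander S D eps) ->
  exists (W : nat -> finType) (e : forall n, rel (W n)) (phi : forall n, W n -> V n),
    (forall n, subcomplex_emb (e n) (S n) (phi n)) /\ graphical_expander R e.
Proof.
move=> [D [eps [eps0 [hsc [hgrow [hdeg htop]]]]]].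
set c := eps / (16 * D.+1)%:R.
have hD : forall n s, (#|[set t | adj (S n) s t]| <= D)%N by move=> n s; exact: (hdeg n s).
pose U n := bestU (S n) c.
exists (fun n => {x : V n | x \in U n}).
exists (fun n (x y : {x : V n | x \in U n}) => adj (S n) (val x) (val y)).
exists (fun n => val).
split.
  move=> n; split; first exact: val_inj.
  split; first by move=> x; exact: (hsc n).1.1.
  by move=> x y /andP [_ ->].
split.
  move=> n; split; first by move=> x y; exact: adj_sym.
  by move=> x; rewrite /adj eqxx.
split.
  move=> M.
  have [M' hM'] : exists M' : nat, (8 * D.+1 * M)%:R <= eps * M'%:R.
    have hx : 0 <= (8 * D.+1 * M)%:R / eps by rewrite divr_ge0 // ?ltW // ler0n.
    exists (Num.bound ((8 * D.+1 * M)%:R / eps)).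
    have := archi_boundP hx; rewrite ltr_pdivrMr // => H.
    by rewrite mulrC ltW.
  have [N hN] := hgrow M'; exists N => n hn.
  have hK : (8 * D.+1 * M)%:R <= eps * #|V n|%:R.
    apply: (le_trans hM'); apply: ler_wpM2l; first exact: ltW.
    by rewrite ler_nat; exact: hN.
  have [U' [hU'e hU'K]] := claim (hsc n).1 (hsc n).2 (hD n) eps0 (htop n) hK.
  rewrite card_W; apply: (leq_trans hU'K); exact: (bestU_spec (S n) c).2 _ hU'e.
split.
  exists D => n x; rewrite /gdeg.
  rewrite -(card_imset _ val_inj); apply: leq_trans (hD n (val x)).
  apply: subset_leq_card; apply/fintype.subsetP => t /imsetP [y]; rewrite inE => hy ->.
  by move: hy; rewrite inE.
apply: (@ex_intro R _ c); split.
  by rewrite /c divr_gt0 // ltr0n.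
move=> n A A0 A2.
set A' := [set val x | x in A].
have cA : #|A'| = #|A| by rewrite card_imset //; exact: val_inj.
have A'U : A' \subset U n.
  by apply/fintype.subsetP => y /imsetP [x _ ->]; exact: valP.
have hexp := (bestU_spec (S n) c).1 A' A'U ltac:(by rewrite cA) ltac:(by rewrite cA -(card_W (U n)); exact: A2).
apply: (le_trans hexp); rewrite cA; apply: ler_wpM2r; first by rewrite invr_ge0 ler0n.
rewrite ler_nat.
apply: (@leq_trans #|[set val y | y in vboundary (fun x y : {x : V n | x \in U n} => adj (S n) (val x) (val y)) A]|);
  last exact: leq_imset_card.
apply: subset_leq_card; apply/fintype.subsetP => y.
rewrite inE => /andP [yU /andP [yA' /existsP [x0 /andP [x0A' adjx]]]].
case/imsetP: x0A' => x xA ex0.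
apply/imsetP; exists (Sub y yU : {x : V n | x \in U n}); last by rewrite SubK.
rewrite inE; apply/andP; split.
  apply: contra yA' => h; apply/imsetP; exists (Sub y yU : {x : V n | x \in U n}) => //.
apply/existsP; exists x; rewrite xA /= -ex0; exact: adjx.
Qed.
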